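(* Let $R$ be a unital amenable affine algebra over a field $K$, with a fixed Følner exhaustion $\{W_n\}$ and ultralimit $\lim_\omega$, and let $\mathrm{rank}$ be the associated rank function on finitely generated left $R$-modules. Then: (1) $\mathrm{rank}(R^n)=n$ for every $n\ge1$ (in particular $R$ has the unique rank property); (2) if $M,N$ are finitely generated $R$-modules and $M$ is either a submodule or a homomorphic image of $N$, then $\mathrm{rank}(M)\le\mathrm{rank}(N)$; (3) if $M,N$ are finitely generated $R$-modules, then $\mathrm{rank}(M\oplus N)=\mathrm{rank}(M)+\mathrm{rank}(N)$.
   Context: An affine algebra is a finitely generated associative algebra over $K$. A Følner exhaustion is a sequence of finite-dimensional $K$-subspaces $W_1\subseteq W_2\subseteq\cdots$ with $\bigcup_nW_n=R$ such that for every $r\in R$, $\lim_{n\to\infty}\dim_K(W_nr+W_n)/\dim_K(W_n)=1$; $R$ is amenable if one exists. $\omega$ is an ultrafilter on $\mathbb N$ and $\lim_\omega$ the associated linear functional on bounded real sequences with $\liminf\le\lim_\omega\le\limsup$, agreeing with the limit on convergent sequences. For a finitely generated module $M=\sum_{i=1}^rRx_i$, $\mathrm{rank}(M)=\lim_\omega\dim_K(W_nx_1+\cdots+W_nx_r)/\dim_K(W_n)$, which is independent of the generators chosen. *)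

(* Defs.v *)
From HB Require Import structures.
From mathcomp Require Import all_boot all_order all_algebra.
From mathcomp Require Import all_classical all_reals all_analysis.
Set Implicit Arguments. Unset Strict Implicit. Unset Printing Implicit Defensive.
Import Order.TTheory GRing.Theory Num.Theory.
Import numFieldNormedType.Exports.
Local Open Scope ring_scope.
Local Open Scope classical_set_scope.

Inductive in_subalg (K : fieldType) (R : algType K) (gens : seq R) : R -> Prop :=
  | subalg_gen x : x \in gens -> in_subalg gens x
  | subalg_one : in_subalg gens 1
  | subalg_add x y : in_subalg gens x -> in_subalg gens y -> in_subalg gens (x + y)
  | subalg_mul x y : in_subalg gens x -> in_subalg gens y -> in_subalg gens (x * y)
  | subalg_scale (k : K) x : in_subalg gens x -> in_subalg gens (k *: x).

Definition affine_algebra (K : fieldType) (R : algType K) : Prop :=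
  exists gens : seq R, forall r : R, in_subalg gens r.

(* A left R-module V is a K-vector space via  k . v := (k%:A) *: v. *)

Definition spanK (K : fieldType) (R : algType K) (V : lmodType R) (s : seq V) : set V :=
  [set v | exists c : 'I_(size s) -> K, v = \sum_(i < size s) ((c i)%:A : R) *: s`_i].

Definition fd_subspace (K : fieldType) (R : algType K) (V : lmodType R) (A : set V) : Prop :=
  exists s : seq V, A = spanK s.

(* dim_K A := the least size of a finite family spanning A (= dimension of A
   when A is a finite-dimensional subspace; 0 by convention otherwise). *)
Definition dimK (K : fieldType) (R : algType K) (V : lmodType R) (A : set V) : nat :=
  let P : pred nat := fun n => `[< exists s : seq V, size s = n /\ A = spanK s >] in
  match pselect (exists n, P n) with
  | left h => ex_minn h
  | right _ => 0%N
  end.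

Definition setadd (V : zmodType) (A B : set V) : set V :=
  [set v | exists a b, A a /\ B b /\ v = a + b].

Definition setscale (K : fieldType) (R : algType K) (V : lmodType R) (W : set R) (x : V) : set V :=
  [set w *: x | w in W].

Definition sum_orbits (K : fieldType) (R : algType K) (V : lmodType R) (W : set R) (xs : seq V)
  : set V := foldr (fun x S => setadd (setscale W x) S) [set 0] xs.

Definition setmulr (K : fieldType) (R : algType K) (W : set R) (r : R) : set R :=
  [set w * r | w in W].

Definition folner_exhaustion (RR : realType) (K : fieldType) (R : algType K)
  (W : nat -> set R) : Prop :=
  [/\ (forall n, @fd_subspace K R R^o (W n)),
      (forall n, W n `<=` W n.+1),
      (\bigcup_n W n = [set: R]) &
      (forall r : R,
         (fun n => (dimK (V := R^o) (setadd (setmulr (W n) r) (W n)))%:R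
                   / (dimK (V := R^o) (W n))%:R : RR) @ \oo --> (1 : RR))].

Definition nonprincipal_ultrafilter (omega : set_system nat) : Prop :=
  UltraFilter omega /\ (forall A : set nat, finite_set A -> omega (~` A)).

Definition ulim (RR : realType) (omega : set_system nat) (a : nat -> RR) : RR :=
  lim (a @ omega).

Definition generates (K : fieldType) (R : algType K) (M : lmodType R) (xs : seq M) : Prop :=
  forall m : M, exists c : 'I_(size xs) -> R, m = \sum_(i < size xs) c i *: xs`_i.

Definition fin_gen (K : fieldType) (R : algType K) (M : lmodType R) : Prop :=
  exists xs : seq M, generates xs.

Definition rank_gens (RR : realType) (K : fieldType) (R : algType K)
  (W : nat -> set R) (omega : set_system nat) (M : lmodType R) (xs : seq M) : RR :=
  ulim omega (fun n => (dimK (sum_orbits (W n) xs))%:R / (dimK (V := R^o) (W n))%:R).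

(* rank(M), computed from some (chosen) finite generating family of M;
   the paper shows it is independent of this choice. *)
Definition rank (RR : realType) (K : fieldType) (R : algType K)
  (W : nat -> set R) (omega : set_system nat) (M : lmodType R) : RR :=
  match pselect (exists xs : seq M, generates xs) with
  | left h => rank_gens RR W omega (proj1_sig (cid h))
  | right _ => 0
  end.

(* Main.v *)
Require Import Defs.
From HB Require Import structures.
From mathcomp Require Import all_boot all_order all_algebra.
From mathcomp Require Import all_classical all_reals all_analysis.
Set Implicit Arguments. Unset Strict Implicit. Unset Printing Implicit Defensive.
Import Order.TTheory GRing.Theory Num.Theory.
Import numFieldNormedType.Exports.
Local Open Scope ring_scope.
Local Open Scope classical_set_scope.

Section Lin.
Variables (K : fieldType) (R : algType K) (V : lmodType R).

Lemma spanK_nil : spanK ([::] : seq V) = [set 0].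
Proof.
rewrite predeqE => v; split.
  by move=> [c ->]; rewrite big_ord0.
by move=> ->; exists (fun _ => 0); rewrite big_ord0.
Qed.

Lemma spanK_cons (x : V) s : spanK (x :: s) =
  [set v | exists k w, spanK s w /\ v = (k%:A : R) *: x + w].
Proof.
rewrite predeqE => v; split.
  move=> [c ->]; exists (c ord0), (\sum_(i < size s) ((c (lift ord0 i))%:A : R) *: s`_i).
  split; first by exists (fun i => c (lift ord0 i)).
  by rewrite big_ord_recl /=.
move=> [k [w [[c ->] ->]]].
exists (fun i : 'I_(size s).+1 => oapp c k (unlift ord0 i)).
rewrite big_ord_recl /= unlift_none /=; congr (_ + _).
by apply: eq_bigr => i _; rewrite liftK.
Qed.


Lemma ksA (a b : K) (v : V) :
  (a%:A : R) *: ((b%:A : R) *: v) = ((a * b)%:A : R) *: v.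
Proof. by rewrite scalerA mulr_algl scalerA. Qed.

Lemma ks1 (v : V) : ((1 : K)%:A : R) *: v = v.
Proof. by rewrite scale1r scale1r. Qed.

Lemma ks0 (v : V) : ((0 : K)%:A : R) *: v = 0.
Proof. by rewrite scale0r scale0r. Qed.

Lemma ksDl (a b : K) (v : V) :
  ((a + b)%:A : R) *: v = (a%:A : R) *: v + (b%:A : R) *: v.
Proof. by rewrite scalerDl scalerDl. Qed.

Lemma span0 (s : seq V) : spanK s 0.
Proof. by exists (fun _ => 0); rewrite big1 // => i _; rewrite ks0. Qed.

Lemma spanD (s : seq V) u v : spanK s u -> spanK s v -> spanK s (u + v).
Proof.
move=> [c ->] [d ->]; exists (fun i => c i + d i).
by rewrite -big_split /=; apply: eq_bigr => i _; rewrite ksDl.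
Qed.

Lemma spanZ (s : seq V) (k : K) v : spanK s v -> spanK s ((k%:A : R) *: v).
Proof.
move=> [c ->]; exists (fun i => k * c i).
by rewrite scaler_sumr; apply: eq_bigr => i _; rewrite ksA.
Qed.

Lemma spanN (s : seq V) v : spanK s v -> spanK s (- v).
Proof.
move=> /(spanZ (-1)); rewrite scaleNr scale1r scaleNr scale1r //.
Qed.

Lemma span_sum (s : seq V) (I : finType) (F : I -> V) :
  (forall i, spanK s (F i)) -> spanK s (\sum_i F i).
Proof.
move=> h; apply: (big_ind (spanK s)) => //; [exact: span0| exact: spanD].
Qed.

Lemma span_mem (s : seq V) x : x \in s -> spanK s x.
Proof.
elim: s => // y s IH; rewrite in_cons spanK_cons => /orP [/eqP ->| /IH h].
  by exists 1, 0; split; [exact: span0| rewrite ks1 addr0].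
by exists 0, x; split => //; rewrite ks0 add0r.
Qed.

Lemma span_sub (s t : seq V) : (forall x, x \in s -> spanK t x) ->
  spanK s `<=` spanK t.
Proof.
elim: s => [_|x s IH h]; first by rewrite spanK_nil => v ->; exact: span0.
rewrite spanK_cons => v [k [w [sw ->]]].
apply: spanD; first by apply: spanZ; apply: h; rewrite mem_head.
by apply: IH => // y ys; apply: h; rewrite in_cons ys orbT.
Qed.

Lemma span_cat (s t : seq V) : spanK (s ++ t) = setadd (spanK s) (spanK t).
Proof.
rewrite predeqE => v; split.
  elim: s v => [|x s IH] v /=.
    by move=> tv; exists 0, v; rewrite add0r; split => //; exact: span0.
  rewrite spanK_cons => -[k [w [/IH [a [b [sa [tb ->]]]] ->]]].
  exists ((k%:A : R) *: x + a), b; split; last by rewrite addrA.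
  by rewrite spanK_cons; exists k, a.
move=> [a [b [sa [tb ->]]]]; apply: spanD.
  by apply: (span_sub _ sa) => y ys; apply: span_mem; rewrite mem_cat ys.
by apply: (span_sub _ tb) => y ys; apply: span_mem; rewrite mem_cat ys orbT.
Qed.

Fixpoint indepr (s : seq V) : Prop :=
  if s is x :: s' then ~ spanK s' x /\ indepr s' else True.

Lemma indep_ord (s : seq V) : indepr s -> forall c : 'I_(size s) -> K,
  \sum_(i < size s) ((c i)%:A : R) *: s`_i = 0 -> forall i, c i = 0.
Proof.
elim: s => [_ c _ [] //|x s IH [nx ids] c].
rewrite big_ord_recl => h0.
have h : ((c ord0)%:A : R) *: x + \sum_(i < size s) ((c (lift ord0 i))%:A : R) *: s`_i = 0.
  by rewrite -[RHS]h0; congr (_ + _); apply: eq_bigr => i _; rewrite lift0.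
have c0 : c ord0 = 0.
  apply/eqP; apply/negPn/negP => nz; apply: nx.
  have -> : x = (((c ord0)^-1)%:A : R) *: - (\sum_(i < size s) ((c (lift ord0 i))%:A : R) *: s`_i).
    have hx : ((c ord0)%:A : R) *: x = - (\sum_(i < size s) ((c (lift ord0 i))%:A : R) *: s`_i).
      by apply/eqP; rewrite -addr_eq0 h.
    by rewrite -hx ksA mulVf // ks1.
  apply: spanZ; apply: spanN.
  by exists (fun i => c (lift ord0 i)); apply: eq_bigr => i _.
move: h; rewrite c0 ks0 add0r => h.
have := IH ids (fun i => c (lift ord0 i)) h.
move=> hl i; case: (unliftP ord0 i) => [j ->|->] //; exact: hl.
Qed.

Lemma steinitz (s t : seq V) : indepr t -> (forall x, x \in t -> spanK s x) ->
  (size t <= size s)%N.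
Proof.
move=> it h.
have H : forall j : 'I_(size t), exists c : 'I_(size s) -> K,
    t`_j = \sum_(i < size s) ((c i)%:A : R) *: s`_i.
  by move=> j; apply: h; apply: mem_nth.
pose M := \matrix_(j < size t, i < size s) proj1_sig (cid (H j)) i.
have fM : row_free M.
  apply: inj_row_free => u Hu; apply/rowP => j; rewrite mxE.
  move: j; apply: (indep_ord it).
  have -> : \sum_(j < size t) ((u 0 j)%:A : R) *: t`_j =
     \sum_(i < size s) (((u *m M) 0 i)%:A : R) *: s`_i.
    transitivity (\sum_(j < size t) \sum_(i < size s) ((u 0 j * M j i)%:A : R) *: s`_i).
      apply: eq_bigr => k _; rewrite (proj2_sig (cid (H k))) scaler_sumr.
      by apply: eq_bigr => i _; rewrite ksA mxE.
    rewrite exchange_big /=; apply: eq_bigr => i _.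
    by rewrite !mxE scaler_suml scaler_suml.
  by rewrite Hu; apply: big1 => i _; rewrite mxE ks0.
move: fM; rewrite /row_free => /eqP <-; exact: rank_leq_col.
Qed.


Lemma dimK_le (A : set V) (s : seq V) : A = spanK s -> (dimK A <= size s)%N.
Proof.
move=> hA; rewrite /dimK; case: pselect => [h|nh]; last first.
  by exfalso; apply: nh; exists (size s); apply/asboolP; exists s.
case: ex_minnP => m _ hm; apply: hm; apply/asboolP; by exists s.
Qed.

Lemma dimK_spec (A : set V) : fd_subspace A ->
  exists s : seq V, size s = dimK A /\ A = spanK s.
Proof.
move=> [s0 h0]; rewrite /dimK; case: pselect => [h|nh]; last first.
  by exfalso; apply: nh; exists (size s0); apply/asboolP; exists s0.
by case: ex_minnP => m /asboolP.
Qed.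

Lemma span_eqmem (s t : seq V) : s =i t -> spanK s = spanK t.
Proof.
move=> e; rewrite eqEsubset; split; apply: span_sub => y ys; apply: span_mem.
  by rewrite -e. by rewrite e.
Qed.

Lemma setadd0 (A : set V) : setadd A [set 0] = A.
Proof.
rewrite predeqE => v; split; first by move=> [a [b [Aa [-> ->]]]]; rewrite addr0.
by move=> Av; exists v, 0; rewrite addr0.
Qed.

Lemma setaddC (A B : set V) : setadd A B = setadd B A.
Proof.
by rewrite predeqE => v; split => -[a [b [Aa [Bb ->]]]]; exists b, a; rewrite addrC.
Qed.

Lemma ext_indep (s b : seq V) : indepr b -> exists t,
  indepr (t ++ b) /\ spanK (t ++ b) = setadd (spanK b) (spanK s).
Proof.
elim: s b => [|x s IH] b ib.
  by exists [::]; rewrite spanK_nil setadd0.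
case: (pselect (spanK b x)) => bx.
  have [t [it ht]] := IH b ib; exists t; split => //.
  rewrite ht -!span_cat; rewrite eqEsubset; split; apply: span_sub => y.
    by move=> ys; apply: span_mem; move: ys; rewrite !mem_cat in_cons => /orP [->|->]; rewrite ?orbT.
  rewrite mem_cat in_cons => /orP [yb|/orP [/eqP ->|ys]].
  - by apply: span_mem; rewrite mem_cat yb.
  - by apply: (span_sub _ bx) => z zb; apply: span_mem; rewrite mem_cat zb.
  - by apply: span_mem; rewrite mem_cat ys orbT.
have [t [it ht]] := IH (x :: b) (conj bx ib).
exists (rcons t x); rewrite cat_rcons; split => //.
rewrite ht -!span_cat; apply: span_eqmem => y.
by rewrite !mem_cat !in_cons !orbA (orbC (y == x)).
Qed.

Lemma basis_ex (A : set V) : fd_subspace A ->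
  exists b, [/\ indepr b, A = spanK b & size b = dimK A].
Proof.
move=> fA; have [s [ss As]] := dimK_spec fA.
have [t [it ht]] := ext_indep s (b := [::]) I.
rewrite cats0 -span_cat /= in ht it.
exists t; split => //; first by rewrite As ht.
apply/eqP; rewrite eqn_leq; apply/andP; split.
  rewrite -ss; apply: steinitz => // y yt; rewrite -ht; exact: span_mem.
by apply: dimK_le; rewrite As ht.
Qed.

Lemma dimK_mono (A B : set V) : fd_subspace A -> fd_subspace B -> A `<=` B ->
  (dimK A <= dimK B)%N.
Proof.
move=> fA fB AB; have [b [ib Ab sb]] := basis_ex fA.
have [s [ss Bs]] := dimK_spec fB.
rewrite -sb -ss; apply: steinitz => // y yb; rewrite -Bs; apply: AB.
by rewrite Ab; exact: span_mem.
Qed.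

Lemma fd_span (s : seq V) : fd_subspace (spanK s).
Proof. by exists s. Qed.

Lemma dimK_span (s : seq V) : (dimK (spanK s) <= size s)%N.
Proof. exact: dimK_le. Qed.

Lemma extend_sub (W A : set V) : fd_subspace W -> fd_subspace A -> W `<=` A ->
  exists t : seq V, A `<=` setadd W (spanK t) /\ (size t + dimK W <= dimK A)%N.
Proof.
move=> fW fA WA; have [b [ib Wb sb]] := basis_ex fW.
have [s [ss As]] := dimK_spec fA.
have [t [it ht]] := ext_indep s ib.
have htA : spanK (t ++ b) = A.
  rewrite ht -Wb -As eqEsubset; split.
    move=> v [a [c [Wa [Ac ->]]]]; rewrite As; apply: spanD; rewrite -As //.
    exact: WA.
  by move=> v Av; exists 0, v; rewrite add0r; split => //; rewrite Wb; exact: span0.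
exists t; split.
  by rewrite -htA span_cat setaddC Wb.
rewrite -sb -size_cat -ss; apply: steinitz => // y yt.
by rewrite -As -htA; exact: span_mem.
Qed.

Lemma dimK_add (A : set V) (t : seq V) : fd_subspace A ->
  (dimK (setadd A (spanK t)) <= dimK A + size t)%N.
Proof.
move=> fA; have [s [ss As]] := dimK_spec fA.
by rewrite -ss -size_cat; apply: dimK_le; rewrite As span_cat.
Qed.

End Lin.


Section Dims.
Variables (K : fieldType) (R : algType K) (V : lmodType R).

Lemma dim_indep (b : seq V) : indepr b -> dimK (spanK b) = size b.
Proof.
move=> ib; apply/eqP; rewrite eqn_leq dimK_span /=.
have [s [ss hs]] := dimK_spec (fd_span b).
by rewrite -ss; apply: steinitz => // y yb; rewrite -hs; exact: span_mem.
Qed.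

End Dims.

Section Maps.
Variables (K : fieldType) (R : algType K) (V V' : lmodType R).
Variable f : V -> V'.
Hypothesis fD : forall u v, f (u + v) = f u + f v.
Hypothesis fZ : forall (k : K) v, f ((k%:A : R) *: v) = (k%:A : R) *: f v.

Lemma f0 : f 0 = 0.
Proof. by rewrite -(ks0 0) fZ ks0. Qed.

Lemma span_map (s : seq V) : spanK (map f s) = f @` spanK s.
Proof.
elim: s => [|x s IH] /=.
  by rewrite !spanK_nil image_set1 f0.
rewrite !spanK_cons predeqE => v; split.
  move=> [k [w [+ ->]]]; rewrite IH => -[u su <-].
  by exists ((k%:A : R) *: x + u); [exists k, u | rewrite fD fZ].
move=> [_ [k [u [su ->]]] <-]; exists k, (f u); split; last by rewrite fD fZ.
by rewrite IH; exists u.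
Qed.

Lemma dim_image (A : set V) : fd_subspace A -> (dimK (f @` A) <= dimK A)%N.
Proof.
move=> fA; have [s [ss As]] := dimK_spec fA.
by rewrite -ss -(size_map f); apply: dimK_le; rewrite As span_map.
Qed.

Lemma fd_image (A : set V) : fd_subspace A -> fd_subspace (f @` A).
Proof. by move=> [s ->]; exists (map f s); rewrite span_map. Qed.

Hypothesis finj : injective f.

Lemma indep_map (s : seq V) : indepr s -> indepr (map f s).
Proof.
elim: s => // x s IH /= [nx iS]; split; last exact: IH.
by rewrite span_map => -[u su /finj e]; apply: nx; rewrite -e.
Qed.


Lemma dim_image_inj (A : set V) : fd_subspace A -> dimK (f @` A) = dimK A.
Proof.
move=> fA; have [b [ib Ab sb]] := basis_ex fA.
rewrite Ab -span_map dim_indep ?size_map; [by rewrite dim_indep | exact: indep_map].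
Qed.

End Maps.




Section Orb.
Variables (K : fieldType) (R : algType K) (N : lmodType R).

Definition orbw (w : seq R) (xs : seq N) : seq N :=
  flatten [seq map (fun a => a *: x) w | x <- xs].

Lemma setscale_span (w : seq R) (x : N) :
  setscale (spanK (V := R^o) w) x = spanK (map (fun a => a *: x) w).
Proof.
rewrite (span_map (V := R^o) (f := fun a : R^o => a *: x)) //.
  by move=> u v; rewrite scalerDl.
by move=> k v; exact: (esym (scalerA _ _ _)).
Qed.

Lemma setmulr_span (w : seq R) (r : R) :
  setmulr (spanK (V := R^o) w) r = spanK (V := R^o) (map (fun a => a * r) w).
Proof.
rewrite (span_map (V := R^o) (V' := R^o) (f := fun a : R^o => (a * r : R^o))) //.
  by move=> u v; rewrite mulrDl.
by move=> k v; exact: (esym (mulrA _ _ _)).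
Qed.

Lemma sum_orbits_span (w : seq R) (xs : seq N) :
  sum_orbits (spanK (V := R^o) w) xs = spanK (orbw w xs).
Proof.
elim: xs => [|x xs IH] /=; first by rewrite spanK_nil.
by rewrite IH setscale_span -span_cat.
Qed.

Lemma size_orb (w : seq R) (xs : seq N) : size (orbw w xs) = (size w * size xs)%N.
Proof. by elim: xs => [|x xs IH] /=; rewrite ?muln0 // size_cat size_map IH mulnS. Qed.

Lemma fd_sum_orbits (W : set R) (xs : seq N) : fd_subspace (V := R^o) W ->
  fd_subspace (sum_orbits W xs).
Proof. by move=> [w ->]; rewrite sum_orbits_span; exists (orbw w xs). Qed.

Lemma dim_sum_orbits_le (W : set R) (xs : seq N) : fd_subspace (V := R^o) W ->
  (dimK (sum_orbits W xs) <= dimK (V := R^o) W * size xs)%N.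
Proof.
move=> fW; have [w [sw Ww]] := dimK_spec fW.
by rewrite -sw -size_orb; apply: dimK_le; rewrite Ww sum_orbits_span.
Qed.

Lemma setscale_sub (W : set R) (ys : seq N) y : fd_subspace (V := R^o) W ->
  y \in ys -> setscale W y `<=` sum_orbits W ys.
Proof.
move=> fW; elim: ys => // x ys IH; rewrite in_cons => /orP [/eqP ->|yys] v Wv /=.
  exists v, 0; rewrite addr0; split => //; split => //.
  by have [w ->] := fW; rewrite sum_orbits_span; exact: span0.
exists 0, v; rewrite add0r; split; last by split => //; exact: IH.
have [w Ww] := fW; exists 0; last by rewrite scale0r.
by rewrite Ww; exact: (span0 (V := R^o)).
Qed.

Lemma setadd_fd (S : set N) (T : seq N) : fd_subspace S -> fd_subspace (setadd S (spanK T)).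
Proof. by move=> [s ->]; exists (s ++ T); rewrite span_cat. Qed.

Lemma setadd_mono (S : set N) (T T' : seq N) : {subset T <= T'} ->
  setadd S (spanK T) `<=` setadd S (spanK T').
Proof.
move=> sub v [a [b [Sa [Tb ->]]]]; exists a, b; split => //; split => //.
by apply: (span_sub _ Tb) => x xT; apply: span_mem; exact: sub.
Qed.

Definition exc (W : set R) (r : R) : nat :=
  (dimK (V := R^o) (setadd (setmulr W r) W) - dimK (V := R^o) W)%N.

Lemma single (W : set R) (ys : seq N) (y : N) (c : R) : fd_subspace (V := R^o) W ->
  y \in ys -> exists T : seq N, (size T <= exc W c)%N /\
  forall a, W a -> setadd (sum_orbits W ys) (spanK T) ((a * c) *: y).
Proof.
move=> fW yys; have [w Ww] := fW.
set A := setadd (setmulr W c) W.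
have fA : fd_subspace (V := R^o) A.
  by exists (map (fun a => a * c) w ++ w); rewrite span_cat /A -setmulr_span -Ww.
have W0 : W 0 by rewrite Ww; exact: (span0 (V := R^o)).
have WA : W `<=` A.
  move=> u Wu; exists 0, u; rewrite add0r; split; last by [].
  by exists 0 => //; rewrite mul0r.
have [t [At ht]] := extend_sub fW fA WA.
exists (map (fun a => a *: y) t); split.
  have hW := leq_trans (leq_addl _ _) ht.
  by rewrite size_map /exc -/A leq_subRL // addnC.
move=> a Wa; have : A (a * c) by exists (a * c), 0; rewrite addr0; split => //; exists a.
move=> /At [u [v [Wu [tv ->]]]]; rewrite scalerDl.
exists (u *: y), (v *: y); split; first by apply: (setscale_sub fW yys); exists u.
split => //; rewrite -setscale_span; by exists v.
Qed.


Lemma size_flatten_map (I : Type) (T : I -> seq N) (l : seq I) :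
  size (flatten (map T l)) = (\sum_(i <- l) size (T i))%N.
Proof. by elim: l => [|i l IH] /=; rewrite ?big_nil ?big_cons // size_cat IH. Qed.

Lemma for_z (W : set R) (ys : seq N) (c : 'I_(size ys) -> R) : fd_subspace (V := R^o) W ->
  exists T : seq N, (size T <= \sum_(i < size ys) exc W (c i))%N /\
  forall a, W a -> setadd (sum_orbits W ys) (spanK T) (a *: \sum_(i < size ys) c i *: ys`_i).
Proof.
move=> fW.
have H : forall i : 'I_(size ys), exists T : seq N, (size T <= exc W (c i))%N /\
  forall a, W a -> setadd (sum_orbits W ys) (spanK T) ((a * c i) *: ys`_i).
  by move=> i; apply: single => //; apply: mem_nth.
pose T i := proj1_sig (cid (H i)).
exists (flatten (map T (index_enum 'I_(size ys)))); split.
  rewrite size_flatten_map; apply: leq_sum => i _.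
  exact: (proj2_sig (cid (H i))).1.
move=> a Wa.
have [sS hS] := fd_sum_orbits ys fW.
rewrite scaler_sumr hS -span_cat; apply: span_sum => i.
rewrite scalerA.
have hTi : setadd (sum_orbits W ys) (spanK (T i)) ((a * c i) *: ys`_i).
  exact: (proj2_sig (cid (H i))).2 a Wa.
move: hTi; rewrite hS -span_cat; apply: span_sub => x xin; apply: span_mem; move: xin; rewrite !mem_cat => /orP [->//|xT].
apply/orP; right; apply/flatten_mapP; exists i => //; exact: mem_index_enum.
Qed.

Lemma master_dim (W : set R) (ys zs : seq N) (c : N -> 'I_(size ys) -> R) :
  fd_subspace (V := R^o) W ->
  (forall z, z \in zs -> z = \sum_(i < size ys) c z i *: ys`_i) ->
  (dimK (sum_orbits W zs) <= dimK (sum_orbits W ys) +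
     \sum_(z <- zs) \sum_(i < size ys) exc W (c z i))%N.
Proof.
move=> fW hc.
have H : forall z, exists T : seq N, (size T <= \sum_(i < size ys) exc W (c z i))%N /\
  forall a, W a -> setadd (sum_orbits W ys) (spanK T) (a *: \sum_(i < size ys) c z i *: ys`_i).
  by move=> z; apply: for_z.
pose T z := proj1_sig (cid (H z)).
pose TT := flatten (map T zs).
have fS := fd_sum_orbits ys fW.
apply: (@leq_trans (dimK (setadd (sum_orbits W ys) (spanK TT)))).
  apply: dimK_mono; [exact: fd_sum_orbits|exact: setadd_fd|].
  have [w Ww] := fW; have [sS hS] := fS.
  rewrite Ww sum_orbits_span -Ww hS -span_cat; apply: span_sub => x.
  move=> /flatten_mapP [z zzs /mapP [a aw ->]].
  rewrite (hc z zzs).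
  have h : forall a, W a -> setadd (sum_orbits W ys) (spanK (T z)) (a *: \sum_(i < size ys) c z i *: ys`_i).
    exact: (proj2_sig (cid (H z))).2.
  move: h; rewrite hS -span_cat => h.
  have : spanK (sS ++ T z) (a *: \sum_(i < size ys) c z i *: ys`_i).
    by apply: h; rewrite Ww; apply: span_mem.
  apply: span_sub => y yin; apply: span_mem; move: yin; rewrite !mem_cat => /orP [->//|yT].
  by apply/orP; right; apply/flatten_mapP; exists z.
apply: (leq_trans (dimK_add _ fS)); rewrite leq_add2l.
rewrite /TT size_flatten_map; apply: leq_sum => z _.
exact: (proj2_sig (cid (H z))).1.
Qed.

End Orb.


Section Gen.
Variables (K : fieldType) (R : algType K) (V : lmodType R).

Lemma span_ind (P : set V) (s : seq V) : P 0 -> (forall u v, P u -> P v -> P (u + v)) ->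
  (forall (k : K) v, P v -> P ((k%:A : R) *: v)) -> (forall x, x \in s -> P x) ->
  spanK s `<=` P.
Proof.
move=> P0 PD PZ Ps v [c ->]; apply: (big_ind P) => // i _.
by apply: PZ; apply: Ps; exact: mem_nth.
Qed.

Lemma indep_cat (s t : seq V) : indepr s -> indepr t ->
  (forall v, spanK s v -> spanK t v -> v = 0) -> indepr (s ++ t).
Proof.
elim: s => [//|x s IH] /= [nx iS] it dj; split; last first.
  apply: IH => // v sv tv; apply: dj => //; rewrite spanK_cons; exists 0, v.
  by rewrite ks0 add0r.
rewrite span_cat => -[a [b [sa [tb e]]]].
have : b = 0.
  apply: dj => //; rewrite spanK_cons; exists 1, (- a); split; first exact: spanN.
  by rewrite ks1 e addrC addKr.
by move=> b0; apply: nx; rewrite e b0 addr0.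
Qed.

Lemma dim_cat_disj (s t : seq V) : (forall v, spanK s v -> spanK t v -> v = 0) ->
  dimK (spanK (s ++ t)) = (dimK (spanK s) + dimK (spanK t))%N.
Proof.
move=> dj.
have [b1 [i1 e1 z1]] := basis_ex (fd_span s).
have [b2 [i2 e2 z2]] := basis_ex (fd_span t).
have -> : spanK (s ++ t) = spanK (b1 ++ b2) by rewrite !span_cat e1 e2.
rewrite dim_indep ?size_cat ?z1 ?z2 //.
by apply: indep_cat => // v; rewrite -e1 -e2; exact: dj.
Qed.

End Gen.

Definition RS (K : fieldType) (R : algType K) (N : lmodType R) (ys : seq N) (z : N) :=
  exists c : 'I_(size ys) -> R, z = \sum_(i < size ys) c i *: ys`_i.

Section RSsec.
Variables (K : fieldType) (R : algType K) (N : lmodType R).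

Lemma RS0 (ys : seq N) : RS ys 0.
Proof. by exists (fun _ => 0); rewrite big1 // => i _; rewrite scale0r. Qed.

Lemma RS_cons (x : N) s r w : RS s w -> RS (x :: s) (r *: x + w).
Proof.
move=> [c ->]; exists (fun i : 'I_(size s).+1 => oapp c r (unlift ord0 i)).
rewrite big_ord_recl /= unlift_none /=; congr (_ + _).
by apply: eq_bigr => i _; rewrite liftK.
Qed.

Lemma RS_sum (I : Type) (l : seq I) (F : I -> N) (r : I -> R) :
  RS (map F l) (\sum_(i <- l) r i *: F i).
Proof.
elim: l => [|i l IH] /=; first by rewrite big_nil; exact: RS0.
by rewrite big_cons; apply: RS_cons.
Qed.

Lemma RS_cat (s t : seq N) a b : RS s a -> RS t b -> RS (s ++ t) (a + b).
Proof.
elim: s a => [|x s IH] a /=.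
  by move=> [c ->] tb; rewrite big_ord0 add0r.
move=> [c ->]; rewrite big_ord_recl => tb.
rewrite -addrA; apply: RS_cons; apply: IH => //.
by exists (fun i => c (lift ord0 i)); apply: eq_bigr => i _; rewrite lift0.
Qed.

End RSsec.

Section RSmap.
Variables (K : fieldType) (R : algType K) (N N' : lmodType R).
Variable f : N -> N'.
Hypothesis fD : forall u v, f (u + v) = f u + f v.
Hypothesis fS : forall (r : R) v, f (r *: v) = r *: f v.

Lemma f0' : f 0 = 0.
Proof. by rewrite -(scale0r (0 : N)) fS scale0r. Qed.

Lemma RS_map (s : seq N) v : RS s v -> RS (map f s) (f v).
Proof.
elim: s v => [|x s IH] v /=.
  by move=> [c ->]; rewrite big_ord0 f0'; exact: RS0.
move=> [c ->]; rewrite big_ord_recl fD fS; apply: RS_cons; apply: IH.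
by exists (fun i => c (lift ord0 i)); apply: eq_bigr => i _; rewrite lift0.
Qed.

Lemma orb_map (w : seq R) (xs : seq N) : orbw w (map f xs) = map f (orbw w xs).
Proof.
elim: xs => [//|x xs IH] /=; rewrite /orbw /= map_cat -/(orbw w xs) -/(orbw w (map f xs)) IH.
by congr (_ ++ _); rewrite -map_comp; apply: eq_map => a /=; rewrite fS.
Qed.

Lemma sum_orbits_map (W : set R) (xs : seq N) : fd_subspace (V := R^o) W ->
  sum_orbits W (map f xs) = f @` sum_orbits W xs.
Proof.
move=> [w ->]; rewrite !sum_orbits_span orb_map span_map // => k v; rewrite fS.
Qed.

End RSmap.

Lemma orb_cat (K : fieldType) (R : algType K) (N : lmodType R) (w : seq R) (s t : seq N) :
  orbw w (s ++ t) = orbw w s ++ orbw w t.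
Proof. by rewrite /orbw map_cat flatten_cat. Qed.

Section Ulim.
Variable RR : realType.
Variable omega : set_system nat.
Hypothesis Hom : nonprincipal_ultrafilter omega.

Let HU : UltraFilter omega := Hom.1.
Let PF : ProperFilter omega := @ultra_proper _ _ HU.
#[local] Existing Instance PF.

Lemma ultra_fmap (U : Type) (f : nat -> U) : UltraFilter (f @ omega).
Proof.
split; first exact: (fmap_proper_filter f PF).
move=> G PG sub; rewrite predeqE => A; split; last exact: sub.
move=> GA; case: (in_ultra_setVsetC (f @^-1` A) HU) => // hC.
have GC : G (~` A) by apply: sub.
have : G (A `&` ~` A) by apply: filterI.
by rewrite setICr => /filter_ex [].
Qed.

Lemma omega_oo (P : set nat) : (\forall n \near \oo, P n) -> omega P.
Proof.
rewrite /prop_near1 /nbhs /= /eventually /filter_from /= => -[N _ HN].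
have fin : finite_set (~` P).
  apply: (sub_finite_set _ (finite_II N)) => n /= nP.
  rewrite /= ltnNge; apply/negP => /HN; exact: nP.
by have := Hom.2 _ fin; rewrite setCK.
Qed.

Lemma oo_omega (f : nat -> RR) (l : RR) : f @ \oo --> l -> f @ omega --> l.
Proof. move=> H A /H; exact: omega_oo. Qed.

Lemma ucvg (a : nat -> RR) (B : RR) : (forall n, 0 <= a n <= B) ->
  a @ omega --> ulim omega a.
Proof.
move=> hb.
have UF := ultra_fmap a.
have [p [_ cp]] : exists p, (`[0, B] `&` cluster (a @ omega)) p.
  apply: segment_compact => /=.
  by apply: filterS (filterT) => n _ /=; rewrite in_itv /= hb.
rewrite ultra_cvg_clusterE /= in cp.
by rewrite /ulim (cvg_lim _ cp).
Qed.


Lemma ulim_le (a b e : nat -> RR) (B B' : RR) :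
  (forall n, 0 <= a n <= B) -> (forall n, 0 <= b n <= B') ->
  e @ \oo --> (0 : RR) -> (forall n, a n <= b n + e n) ->
  ulim omega a <= ulim omega b.
Proof.
move=> ha hb he hab.
have cb := ucvg hb; have ce := oo_omega he.
have cbe : (b \+ e) @ omega --> ulim omega b + 0 by exact: cvgD.
rewrite -[ulim omega b]addr0 -(cvg_lim _ cbe) //.
apply: ler_lim; [exact: cvgP (ucvg ha)| exact: cvgP cbe|].
by apply: filterE => n; exact: hab.
Qed.

Lemma ulim_add (a b : nat -> RR) (B B' : RR) :
  (forall n, 0 <= a n <= B) -> (forall n, 0 <= b n <= B') ->
  ulim omega (a \+ b) = ulim omega a + ulim omega b.
Proof.
move=> ha hb; rewrite {1}/ulim.
exact: (cvg_lim _ (cvgD (ucvg ha) (ucvg hb))).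
Qed.

Lemma ulim_cst (a : nat -> RR) (c : RR) : a @ \oo --> c -> ulim omega a = c.
Proof. move=> h; exact: (cvg_lim _ (oo_omega h)). Qed.

End Ulim.


Section An.
Variable RR : realType.

Lemma cvg_sum0 (T : Type) (l : seq T) (f : T -> nat -> RR) :
  (forall x, f x @ \oo --> (0 : RR)) -> (fun n => \sum_(x <- l) f x n) @ \oo --> (0 : RR).
Proof.
move=> h; elim: l => [|x l IH].
  have -> : (fun n => \sum_(x <- [::]) f x n) = (fun=> 0 : RR).
    by apply: funext => n; rewrite big_nil.
  exact: cvg_cst.
have -> : (fun n => \sum_(y <- x :: l) f y n) = f x \+ (fun n => \sum_(y <- l) f y n).
  by apply: funext => n; rewrite big_cons.
have := cvgD (h x) IH; rewrite addr0; exact.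
Qed.

Variables (K : fieldType) (R : algType K) (W : nat -> set R).
Hypothesis HF : folner_exhaustion RR W.

Definition dW n : nat := dimK (V := R^o) (W n).

Lemma fdW n : fd_subspace (V := R^o) (W n).
Proof. by case: HF. Qed.

Definition ratio (N : lmodType R) (xs : seq N) n : RR :=
  (dimK (sum_orbits (W n) xs))%:R / (dW n)%:R.

Lemma rat_bd (N : lmodType R) (xs : seq N) n : 0 <= ratio xs n <= (size xs)%:R.
Proof.
rewrite /ratio; apply/andP; split; first by rewrite divr_ge0.
have h := dim_sum_orbits_le xs (fdW n).
case: (posnP (dW n)) => [->|dp]; first by rewrite invr0 mulr0.
rewrite ler_pdivrMr ?ltr0n // -natrM ler_nat mulnC; exact: h.
Qed.

Lemma dW_pos : \forall n \near \oo, (0 < dW n)%N.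
Proof.
case: HF => _ _ _ /(_ 1) hf.
have H := cvgr_gt _ hf (0 : RR) ltr01.
near=> n.
have : (0 : RR) < (dimK (V := R^o) (setadd (setmulr (W n) 1) (W n)))%:R / (dimK (V := R^o) (W n))%:R.
  near: n; exact: H.
rewrite /dW lt0n; apply: contraTN => /eqP ->.
by rewrite invr0 mulr0 ltxx.
Unshelve. all: by end_near.
Qed.

Lemma fdA (V : set R) r : fd_subspace (V := R^o) V -> fd_subspace (V := R^o) (setadd (setmulr V r) V).
Proof.
move=> [w Ww]; exists (map (fun a => a * r) w ++ w).
by rewrite span_cat -setmulr_span -Ww.
Qed.

Lemma subA (V : set R) r : fd_subspace (V := R^o) V -> V `<=` setadd (setmulr V r) V.
Proof.
move=> [w Ww] u Vu; exists 0, u; rewrite add0r; split; last by [].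
exists 0; last by rewrite mul0r.
by rewrite Ww; exact: (span0 (V := R^o)).
Qed.

Lemma exc_cvg r : (fun n => (exc (W n) r)%:R / (dW n)%:R : RR) @ \oo --> (0 : RR).
Proof.
case: HF => _ _ _ /(_ r) hf.
pose g n : RR := (dimK (V := R^o) (setadd (setmulr (W n) r) (W n)))%:R / (dimK (V := R^o) (W n))%:R.
have hg : (fun n => g n - 1) @ \oo --> (0 : RR).
  rewrite -(subrr (1 : RR)); apply: cvgB => //; exact: cvg_cst.
apply: cvg_trans hg; apply: near_eq_cvg.
have hp := dW_pos.
near=> n.
have dp : (0 < dW n)%N by near: n; exact: hp.
have le : (dW n <= dimK (V := R^o) (setadd (setmulr (W n) r) (W n)))%N.
  apply: dimK_mono; [exact: fdW| exact: fdA (fdW n)| exact: subA (fdW n)].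
rewrite /exc natrB // mulrBl divff //= pnatr_eq0 -lt0n; exact: dp.
Unshelve. all: by end_near.
Qed.


Variable omega : set_system nat.
Hypothesis Hom : nonprincipal_ultrafilter omega.

Lemma rank_gensE (N : lmodType R) (xs : seq N) :
  rank_gens RR W omega xs = ulim omega (ratio xs).
Proof. by []. Qed.

Lemma master_rank (N : lmodType R) (ys zs : seq N) : (forall z, z \in zs -> RS ys z) ->
  rank_gens RR W omega zs <= rank_gens RR W omega ys.
Proof.
move=> hz.
pose c (z : N) : 'I_(size ys) -> R :=
  match pselect (RS ys z) with left h => proj1_sig (cid h) | right _ => fun _ => 0 end.
have hc : forall z, z \in zs -> z = \sum_(i < size ys) c z i *: ys`_i.
  move=> z zz; rewrite /c; case: pselect => [h|nh]; last by exfalso; apply: nh; exact: hz.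
  exact: (proj2_sig (cid h)).
rewrite !rank_gensE.
apply: (@ulim_le RR omega Hom _ _
  (fun n => \sum_(z <- zs) \sum_(i < size ys) (exc (W n) (c z i))%:R / (dW n)%:R)
  (size zs)%:R (size ys)%:R).
- exact: rat_bd.
- exact: rat_bd.
- apply: cvg_sum0 => z; apply: cvg_sum0 => i; exact: exc_cvg.
- move=> n; have h := master_dim (fdW n) hc.
  have -> : \sum_(z <- zs) \sum_(i < size ys) (exc (W n) (c z i))%:R / (dW n)%:R =
     (\sum_(z <- zs) \sum_(i < size ys) exc (W n) (c z i))%:R / (dW n)%:R :> RR.
    by rewrite natr_sum mulr_suml; apply: eq_bigr => z _; rewrite natr_sum mulr_suml.
  by rewrite /ratio -mulrDl ler_wpM2r ?invr_ge0 ?ler0n // -natrD ler_nat.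
Qed.

Lemma rank_eq (N : lmodType R) (xs : seq N) : generates xs ->
  rank RR W omega N = rank_gens RR W omega xs.
Proof.
move=> gx; rewrite /rank; case: pselect => [h|nh]; last by exfalso; apply: nh; exists xs.
apply/eqP; rewrite eq_le; apply/andP; split; apply: master_rank => z _.
  exact: gx.
exact: (proj2_sig (cid h)).
Qed.

End An.


Section Fin.
Variables (RR : realType) (K : fieldType) (R : algType K) (W : nat -> set R) (omega : set_system nat).
Hypothesis HF : folner_exhaustion RR W.
Hypothesis Hom : nonprincipal_ultrafilter omega.

Lemma part2a (M N : lmodType R) (f : {linear M -> N}) :
  fin_gen M -> fin_gen N -> injective f -> rank RR W omega M <= rank RR W omega N.
Proof.
move=> [xs gx] [ys gy] fi.
rewrite (rank_eq HF Hom gx) (rank_eq HF Hom gy).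
have fD : forall u v, f (u + v) = f u + f v by move=> u v; rewrite raddfD.
have fS : forall (r : R) v, f (r *: v) = r *: f v by move=> r v; rewrite linearZ_LR.
have -> : rank_gens RR W omega xs = rank_gens RR W omega (map f xs).
  rewrite !rank_gensE; congr ulim; apply: funext => n; rewrite /ratio.
  have fZ : forall (k : K) v, f ((k%:A : R) *: v) = (k%:A : R) *: f v by move=> k v; rewrite fS.
  by rewrite (sum_orbits_map fD fS _ (fdW HF n)) (dim_image_inj fD fZ fi (fd_sum_orbits xs (fdW HF n))).
apply: (master_rank HF Hom) => z _; exact: gy.
Qed.

Lemma part2b (M N : lmodType R) (g : {linear N -> M}) :
  fin_gen M -> fin_gen N -> (forall m : M, exists y : N, g y = m) ->
  rank RR W omega M <= rank RR W omega N.
Proof.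
move=> [xs gx] [ys gy] gs.
rewrite (rank_eq HF Hom gx) (rank_eq HF Hom gy).
have fD : forall u v, g (u + v) = g u + g v by move=> u v; rewrite raddfD.
have fS : forall (r : R) v, g (r *: v) = r *: g v by move=> r v; rewrite linearZ_LR.
pose zs := map (fun m => proj1_sig (cid (gs m))) xs.
have ez : map g zs = xs.
  rewrite -map_comp -[RHS]map_id; apply: eq_map => m /=; exact: (proj2_sig (cid (gs m))).
apply: (@le_trans _ _ (rank_gens RR W omega zs)); last first.
  apply: (master_rank HF Hom) => z _; exact: gy.
rewrite !rank_gensE -ez.
apply: (ulim_le Hom (e := fun=> 0) (rat_bd HF _) (rat_bd HF _)); first exact: cvg_cst.
move=> n; rewrite addr0 /ratio ler_wpM2r ?invr_ge0 ?ler0n // ler_nat.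
have fZ : forall (k : K) v, g ((k%:A : R) *: v) = (k%:A : R) *: g v by move=> k v; rewrite fS.
rewrite (sum_orbits_map fD fS _ (fdW HF n)); exact: (dim_image fD fZ (fd_sum_orbits zs (fdW HF n))).
Qed.


Lemma pairD (M N : lmodType R) (a b : M) (c d : N) :
  ((a, c) : (M * N)%type) + (b, d) = (a + b, c + d).
Proof. by []. Qed.

Lemma pairZ (M N : lmodType R) (a : M) (c : N) (r : R) :
  (r *: ((a, c) : (M * N)%type)) = (r *: a, r *: c).
Proof. by []. Qed.

Lemma part3 (M N : lmodType R) : fin_gen M -> fin_gen N ->
  rank RR W omega (M * N)%type = rank RR W omega M + rank RR W omega N.
Proof.
move=> [xs gx] [ys gy].
pose il := fun x : M => ((x, 0) : (M * N)%type).
pose ir := fun y : N => ((0, y) : (M * N)%type).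
have ilD : forall u v, il (u + v) = il u + il v by move=> u v; rewrite /il pairD addr0.
have ilS : forall (r : R) v, il (r *: v) = r *: il v by move=> r v; rewrite /il pairZ scaler0.
have irD : forall u v, ir (u + v) = ir u + ir v by move=> u v; rewrite /ir pairD addr0.
have irS : forall (r : R) v, ir (r *: v) = r *: ir v by move=> r v; rewrite /ir pairZ scaler0.
have ilZ : forall (k : K) v, il ((k%:A : R) *: v) = (k%:A : R) *: il v by move=> k v; rewrite ilS.
have irZ : forall (k : K) v, ir ((k%:A : R) *: v) = (k%:A : R) *: ir v by move=> k v; rewrite irS.
have ili : injective il by move=> u v [].
have iri : injective ir by move=> u v [].
pose L := map il xs ++ map ir ys.
have gL : generates L.
  move=> [a b]; have -> : ((a, b) : (M * N)%type) = il a + ir b by rewrite /il /ir pairD addr0 add0r.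
  by apply: RS_cat; [apply: (RS_map ilD ilS); exact: gx | apply: (RS_map irD irS); exact: gy].
rewrite (rank_eq HF Hom gL) (rank_eq HF Hom gx) (rank_eq HF Hom gy) !rank_gensE.
rewrite -(ulim_add Hom (rat_bd HF xs) (rat_bd HF ys)); congr ulim.
apply: funext => n; rewrite /ratio /= -mulrDl -natrD; congr (_%:R / _).
have [w Ww] := fdW HF n.
rewrite Ww !sum_orbits_span orb_cat !orb_map // dim_cat_disj.
  rewrite !span_map // !dim_image_inj //; exact: fd_span.
move=> [a b]; rewrite !span_map // => -[u _ [_ eb]] [v _ [ea' _]]; by rewrite -eb -ea'.
Qed.


Lemma dim_delta m (w : seq R) (l : seq 'I_m) : indepr (V := R^o) w -> uniq l ->
  dimK (spanK (flatten [seq map (fun a => a *: (delta_mx 0 i : 'rV[R]_m)) w | i <- l]))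
  = (size l * size w)%N.
Proof.
move=> iw; elim: l => [_|i l IH /= /andP [il ul]].
  by rewrite mul0n; apply/eqP; rewrite -leqn0; exact: (dimK_le (s := [::]) erefl).
pose io := fun a : R^o => a *: (delta_mx 0 i : 'rV[R]_m).
have ioD : forall u v, io (u + v) = io u + io v by move=> u v; rewrite /io scalerDl.
have ioZ : forall (k : K) v, io ((k%:A : R) *: v) = (k%:A : R) *: io v.
  by move=> k v; exact: (esym (scalerA _ _ _)).
have ioi : injective io.
  move=> a b /(congr1 (fun M : 'rV[R]_m => M 0 i)); rewrite /io !mxE !eqxx /= !mulr1 //.
rewrite dim_cat_disj; last first.
  move=> v h1 h2; apply/rowP => j; rewrite mxE.
  have P1 : forall j, j != i -> v 0 j = 0.
    apply: (span_ind (P := fun v : 'rV[R]_m => forall j, j != i -> v 0 j = 0) _ _ _ _ h1).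
    - by move=> j' _; rewrite mxE.
    - by move=> u1 u2 hu hv j' ne; rewrite mxE hu // hv // addr0.
    - by move=> k u hu j' ne; rewrite mxE hu // mulr0.
    - move=> x /mapP [a _ ->] j' ne; rewrite !mxE eqxx /=.
      by rewrite (negbTE ne) mulr0.
  have P2 : v 0 i = 0.
    apply: (span_ind (P := fun v : 'rV[R]_m => v 0 i = 0) _ _ _ _ h2).
    - by rewrite mxE.
    - by move=> u1 u2 hu hv; rewrite mxE hu hv addr0.
    - by move=> k u hu; rewrite mxE hu mulr0.
    - move=> x /flatten_mapP [j0 jl /mapP [a _ ->]]; rewrite !mxE eqxx /=.
      have ne : i != j0 by apply: contraNneq il => ->.
      by rewrite (negbTE ne) mulr0.
  by case: (eqVneq j i) => [->|ne]; [exact: P2| exact: P1].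
rewrite (IH ul) (_ : [seq a *: (delta_mx 0 i : 'rV[R]_m) | a <- w] = map io w) // (span_map ioD ioZ) (dim_image_inj ioD ioZ ioi (fd_span (V := R^o) w)).
by rewrite dim_indep // mulSn.
Qed.

Lemma size_index_enum_ord m : size (index_enum 'I_m) = m.
Proof. by rewrite [index_enum _]unlock -enumT size_enum_ord. Qed.

Lemma part1 n : (1 <= n)%N -> rank RR W omega 'rV[R]_n = n%:R.
Proof.
case: n => // n _.
pose e := fun i : 'I_n.+1 => (delta_mx 0 i : 'rV[R]_n.+1).
pose es := map e (index_enum 'I_n.+1).
have ges : generates es.
  move=> v; have -> : v = \sum_(i <- index_enum 'I_n.+1) v 0 i *: e i := row_sum_delta v.
  exact: RS_sum.
rewrite (rank_eq HF Hom ges) rank_gensE; apply: (ulim_cst Hom).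
apply: cvg_trans (near_eq_cvg _) (cvg_cst _).
have hp := dW_pos HF; near=> k.
have dp : (0 < dW W k)%N by near: k; exact: hp.
have [w [iw Ww sw]] := basis_ex (fdW HF k).
rewrite /ratio Ww sum_orbits_span /orbw -map_comp.
rewrite (dim_delta iw (index_enum_uniq _)) size_index_enum_ord natrM sw -/(dW W k).
by rewrite -mulrA divff ?mulr1 // pnatr_eq0 -lt0n.
Unshelve. all: by end_near.
Qed.

End Fin.

Unset Implicit Arguments.
Set Strict Implicit.

Theorem corollary1 (RR : realType) (K : fieldType) (R : algType K)
  (W : nat -> set R) (omega : set_system nat) :
  affine_algebra R ->
  folner_exhaustion RR W ->
  nonprincipal_ultrafilter omega ->
  [/\ (* (1) rank(R^n) = n *)
      (forall n : nat, (1 <= n)%N -> rank RR W omega 'rV[R]_n = n%:R),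
      (* (2a) M isomorphic to a submodule of N *)
      (forall (M N : lmodType R) (f : {linear M -> N}),
         fin_gen M -> fin_gen N -> injective f ->
         rank RR W omega M <= rank RR W omega N),
      (* (2b) M a homomorphic image of N *)
      (forall (M N : lmodType R) (g : {linear N -> M}),
         fin_gen M -> fin_gen N -> (forall m : M, exists y : N, g y = m) ->
         rank RR W omega M <= rank RR W omega N) &
      (* (3) additivity on direct sums *)
      (forall (M N : lmodType R), fin_gen M -> fin_gen N ->
         rank RR W omega (M * N)%type = rank RR W omega M + rank RR W omega N)].
Proof.
move=> _ HF Hom; split.
- exact: part1.
- exact: part2a.
- exact: part2b.
- exact: part3.
Qed.
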